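(* Let $\mathscr{P},\mathscr{Q}$ be finite posets and $\mathscr{R}$ a finite poset. (1) $\mathscr{R}\in SAv(\mathscr{P}\sqcup\mathscr{Q})$ if and only if for every partition $(R_1,R_2)$ of the ground set of $\mathscr{R}$ into two blocks, with $\mathscr{R}_1,\mathscr{R}_2$ the induced subposets on $R_1,R_2$, either $\mathscr{R}_1\in SAv(\mathscr{P})$ or $\mathscr{R}_2\in SAv(\mathscr{Q})$. (2) If $\mathscr{R}\in SAv(\mathscr{P}\oplus\mathscr{Q})$, then for every ordered partition $(R_1,R_2)$ of $\mathscr{R}$ into two blocks, either $\mathscr{R}_1\in SAv(\mathscr{P})$ or $\mathscr{R}_2\in SAv(\mathscr{Q})$. If $\mathscr{R}\notin SAv(\mathscr{P}\oplus\mathscr{Q})$, then there exists a weakly ordered partition $(R_1,R_2)$ of $\mathscr{R}$ into two blocks such that $\mathscr{R}_1\notin SAv(\mathscr{P})$ and $\mathscr{R}_2\notin SAv(\mathscr{Q})$.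
   Context: A poset $\mathscr{R}$ weakly contains $\mathscr{P}$ if there is an injective order-preserving map $\mathscr{P}\to\mathscr{R}$; $\mathscr{R}$ strongly avoids $\mathscr{P}$ otherwise, and $SAv(\mathscr{P})$ is the class of finite posets strongly avoiding $\mathscr{P}$. A partition into two blocks is an ordered pair $(R_1,R_2)$ of disjoint subsets whose union is the ground set. It is an ordered partition if $x\le y$ for all $x\in R_1$, $y\in R_2$, and a weakly ordered partition if $x\not\ge y$ for all $x\in R_1$, $y\in R_2$. The disjoint union $\mathscr{P}\sqcup\mathscr{Q}$ has as ground set the disjoint union of the ground sets, with $x\le y$ iff $x\le y$ in $\mathscr{P}$ or in $\mathscr{Q}$. The linear sum $\mathscr{P}\oplus\mathscr{Q}$ has the same ground set, with $x\le y$ iff $x\le y$ in $\mathscr{P}$, or $x\le y$ in $\mathscr{Q}$, or $x\in\mathscr{P}$ and $y\in\mathscr{Q}$. *)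

(* Defs.v *)
From mathcomp Require Import all_boot.
Set Implicit Arguments. Unset Strict Implicit. Unset Printing Implicit Defensive.

Record finPoset := FinPoset {
  pcar :> finType;
  ple : rel pcar;
  ple_refl : reflexive ple;
  ple_anti : antisymmetric ple;
  ple_trans : transitive ple }.

Definition weakly_contains (R P : finPoset) : Prop :=
  exists f : pcar P -> pcar R,
    injective f /\ forall x y : pcar P, ple x y -> ple (f x) (f y).

(* R strongly avoids P, i.e. R \in SAv(P). *)
Definition SAv (P R : finPoset) : Prop := ~ weakly_contains R P.

Section Sub.
Variables (R : finPoset) (A : {set pcar R}).
Definition sub_car : finType := {x : pcar R | x \in A}.
Definition sub_le : rel sub_car := fun x y => ple (val x) (val y).
Lemma sub_refl : reflexive sub_le.
Proof. by move=> x; apply: ple_refl. Qed.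
Lemma sub_anti : antisymmetric sub_le.
Proof. by move=> x y H; apply: val_inj; apply: ple_anti. Qed.
Lemma sub_trans : transitive sub_le.
Proof. by move=> y x z; apply: ple_trans. Qed.
Definition induced : finPoset := FinPoset sub_refl sub_anti sub_trans.
End Sub.

Section Sums.
Variables P Q : finPoset.
Definition sum_car : finType := (pcar P + pcar Q)%type.

Definition dunion_le : rel sum_car := fun a b =>
  match a, b with
  | inl x, inl y => ple x y
  | inr x, inr y => ple x y
  | _, _ => false
  end.
Lemma dunion_refl : reflexive dunion_le.
Proof. by case=> x /=; apply: ple_refl. Qed.
Lemma dunion_anti : antisymmetric dunion_le.
Proof.
by case=> x [] y //= H; congr (_ _); apply: ple_anti.
Qed.
Lemma dunion_trans : transitive dunion_le.
Proof. by case=> y [] x [] z //=; apply: ple_trans. Qed.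
Definition dunion : finPoset := FinPoset dunion_refl dunion_anti dunion_trans.

Definition lsum_le : rel sum_car := fun a b =>
  match a, b with
  | inl x, inl y => ple x y
  | inr x, inr y => ple x y
  | inl _, inr _ => true
  | inr _, inl _ => false
  end.
Lemma lsum_refl : reflexive lsum_le.
Proof. by case=> x /=; apply: ple_refl. Qed.
Lemma lsum_anti : antisymmetric lsum_le.
Proof.
by case=> x [] y //= /andP[] //= H1 H2; congr (_ _); apply: ple_anti; rewrite H1 H2.
Qed.
Lemma lsum_trans : transitive lsum_le.
Proof. by case=> y [] x [] z //=; apply: ple_trans. Qed.
Definition lsum : finPoset := FinPoset lsum_refl lsum_anti lsum_trans.
End Sums.

Definition is_partition2 (R : finPoset) (R1 R2 : {set pcar R}) : Prop :=
  [disjoint R1 & R2] /\ R1 :|: R2 = [set: pcar R].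

Definition ordered_partition (R : finPoset) (R1 R2 : {set pcar R}) : Prop :=
  is_partition2 R1 R2 /\ forall x y, x \in R1 -> y \in R2 -> ple x y.

Definition weakly_ordered_partition (R : finPoset) (R1 R2 : {set pcar R}) : Prop :=
  is_partition2 R1 R2 /\ forall x y, x \in R1 -> y \in R2 -> ~~ ple y x.

(* Main.v *)
Require Import Defs.
From mathcomp Require Import all_boot.
From Stdlib Require Import Classical.

Set Implicit Arguments. Unset Strict Implicit.

Lemma comp_part (R : finPoset) : forall A : {set pcar R}, is_partition2 A (~: A).
Proof.
move=> A; split; last by rewrite setUCr.
by rewrite -setI_eq0 setICr.
Qed.

Definition comb (P Q R : finPoset) (R1 R2 : {set pcar R})
  (f : pcar P -> pcar (induced R1)) (g : pcar Q -> pcar (induced R2)) :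
  sum_car P Q -> pcar R :=
  fun s => match s with inl x => val (f x) | inr y => val (g y) end.

Lemma comb_inj (P Q R : finPoset) (R1 R2 : {set pcar R})
  (f : pcar P -> pcar (induced R1)) (g : pcar Q -> pcar (induced R2)) :
  [disjoint R1 & R2] -> injective f -> injective g -> injective (comb f g).
Proof.
move=> D fi gi [x|x] [y|y] /= E.
- by rewrite (fi _ _ (val_inj E)).
- have h1 : sval (f x) \in R1 := svalP (f x).
  have h2 : sval (g y) \in R2 := svalP (g y).
  by move: E h1 => /= ->; rewrite (disjointFl D h2).
- have h1 : sval (g x) \in R2 := svalP (g x).
  have h2 : sval (f y) \in R1 := svalP (f y).
  by move: E h2 => /= <-; rewrite (disjointFl D h1).
- by rewrite (gi _ _ (val_inj E)).
Qed.

Definition emb (P R : finPoset) (A : {set pcar R}) (k : pcar P -> pcar R)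
  (H : forall x, k x \in A) : pcar P -> pcar (induced A) :=
  fun x => exist (fun z => z \in A) (k x) (H x).

Lemma emb_ok (P R : finPoset) (A : {set pcar R}) (k : pcar P -> pcar R)
  (H : forall x, k x \in A) :
  injective k -> (forall x y, ple x y -> ple (k x) (k y)) ->
  weakly_contains (induced A) P.
Proof.
move=> ki km; exists (emb H); split.
- by move=> x y E; apply: ki; exact: (f_equal val E).
- by move=> x y le; rewrite /= /sub_le /=; apply: km.
Qed.

Theorem mainTheorem15 (P Q R : finPoset) :
  (SAv (dunion P Q) R <->
     (forall R1 R2 : {set pcar R}, is_partition2 R1 R2 ->
        SAv P (induced R1) \/ SAv Q (induced R2)))
  /\
  (SAv (lsum P Q) R ->
     forall R1 R2 : {set pcar R}, ordered_partition R1 R2 ->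
        SAv P (induced R1) \/ SAv Q (induced R2))
  /\
  (~ SAv (lsum P Q) R ->
     exists R1 R2 : {set pcar R}, weakly_ordered_partition R1 R2 /\
        ~ SAv P (induced R1) /\ ~ SAv Q (induced R2)).
Proof.
split; [split|split].
- move=> S R1 R2 [D U].
  apply: NNPP => /not_or_and [/NNPP [f [fi fm]] /NNPP [g [gi gm]]].
  apply: S; exists (comb f g); split; first exact: comb_inj.
  by move=> [x|x] [y|y] //= le; [apply: fm | apply: gm].
- move=> H [h [hi hm]].
  pose R1 := [set z | [exists x, h (inl x) == z]].
  have H1 : forall x, h (inl x) \in R1.
    by move=> x; rewrite inE; apply/existsP; exists x.
  have H2 : forall y, h (inr y) \in ~: R1.
    move=> y; rewrite !inE; apply/negP => /existsP [x /eqP E].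
    by have := hi _ _ E.
  case: (H R1 (~: R1) (comp_part R1)); apply.
  + apply: (emb_ok H1) => [x y E|x y le]; first by case: (hi _ _ E).
    exact: (hm (inl x) (inl y)).
  + apply: (emb_ok H2) => [x y E|x y le]; first by case: (hi _ _ E).
    exact: (hm (inr x) (inr y)).
- move=> S R1 R2 [[D U] O].
  apply: NNPP => /not_or_and [/NNPP [f [fi fm]] /NNPP [g [gi gm]]].
  apply: S; exists (comb f g); split; first exact: comb_inj.
  move=> [x|x] [y|y] //= le; [apply: fm | | apply: gm] => //.
  by apply: O; [exact: valP | exact: valP].
- move=> /NNPP [h [hi hm]].
  pose R2 := [set z | [exists y, ple (h (inr y)) z]].
  exists (~: R2), R2; split; [split|split].
  + rewrite /is_partition2 setUC; split; last by rewrite setUCr.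
    by rewrite -setI_eq0 setIC setICr.
  + move=> x y; rewrite !inE => /existsP nx /existsP [w hw]; apply/negP => le.
    by apply: nx; exists w; apply: ple_trans le.
  + have H1 : forall x, h (inl x) \in ~: R2.
      move=> x; rewrite !inE; apply/negP => /existsP [y le].
      have le2 : ple (h (inl x)) (h (inr y)) by exact: (hm (inl x) (inr y)).
      have E : h (inr y) = h (inl x) by apply: ple_anti; rewrite le le2.
      by have := hi _ _ E.
    move=> N; apply: N; apply: (emb_ok H1) => [x y E|x y le].
    * by case: (hi _ _ E).
    * exact: (hm (inl x) (inl y)).
  + have H2 : forall y, h (inr y) \in R2.
      by move=> y; rewrite inE; apply/existsP; exists y; apply: ple_refl.
    move=> N; apply: N; apply: (emb_ok H2) => [x y E|x y le].
    * by case: (hi _ _ E).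
    * exact: (hm (inr x) (inr y)).
Qed.
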